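(* ${\sf ITL}^0_{\circ\forall}$ is complete for the class of expanding posets, and ${\sf ITL}^{\sf FS}_{\circ\forall}$ is complete for the class of persistent posets; that is, every $\mathcal L_{\circ\forall}$-formula valid on all expanding posets belongs to ${\sf ITL}^0_{\circ\forall}$, and every $\mathcal L_{\circ\forall}$-formula valid on all persistent posets belongs to ${\sf ITL}^{\sf FS}_{\circ\forall}$.
   Context: Syntax: fix a countably infinite set $\mathbb P$ of propositional variables. $\mathcal L_{\circ\forall}$ is given by $\varphi ::= \bot \mid p \mid \varphi\wedge\varphi \mid \varphi\vee\varphi \mid \varphi\to\varphi \mid \circ\varphi \mid \forall\varphi$ with $p\in\mathbb P$; $\neg\varphi:=\varphi\to\bot$, $\varphi\leftrightarrow\psi := (\varphi\to\psi)\wedge(\psi\to\varphi)$. Here $\forall$ is a universal modality. Semantics: a dynamical system is $(X,\mathcal T,f)$ with $(X,\mathcal T)$ a topological space and $f\colon X\to X$ continuous. A valuation assigns to each formula an open set with $[\![\bot]\!]=\varnothing$, $[\![\varphi\wedge\psi]\!]=[\![\varphi]\!]\cap[\![\psi]\!]$, $[\![\varphi\vee\psi]\!]=[\![\varphi]\!]\cup[\![\psi]\!]$, $[\![\varphi\to\psi]\!]=\big((X\setminus[\![\varphi]\!])\cup[\![\psi]\!]\big)^\circ$, $[\![\circ\varphi]\!]=f^{-1}[\![\varphi]\!]$, and $[\![\forall\varphi]\!]=X$ if $[\![\varphi]\!]=X$, $=\varnothing$ otherwise. A formula is valid on a class if $[\![\varphi]\!]=X$ for every system of the class and every valuation. An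 expanding poset is a dynamical system whose topology is the up-set topology of a partial order (open sets = upward closed sets); equivalently $f$ is monotone. A persistent poset is an expanding poset whose map $f$ is moreover open. Logics: ${\sf ITL}^0_{\circ\forall}$ is the least set of $\mathcal L_{\circ\forall}$-formulas containing all substitution instances of the axioms of intuitionistic propositional logic, of (N1) $\neg\circ\bot$, (N2) $\circ\varphi\wedge\circ\psi\to\circ(\varphi\wedge\psi)$, (N3) $\circ(\varphi\vee\psi)\to\circ\varphi\vee\circ\psi$, (N4) $\circ(\varphi\to\psi)\to(\circ\varphi\to\circ\psi)$, and of (UA1) $\forall\varphi\vee\neg\forall\varphi$, (UA2) $\forall(\varphi\to\psi)\to(\forall\varphi\to\forall\psi)$, (UA3) $\forall(\varphi\vee\forall\psi)\to\forall\varphi\vee\forall\psi$, (UA4) $\forall\varphi\to\varphi$, (UA5) $\forall\varphi\to\forall\forall\varphi$, (UA6) $\forall\varphi\leftrightarrow\circ\forall\varphi$, closed under modus ponens, the rule from $\varphi$ infer $\circ\varphi$, and the rule from $\varphi$ infer $\forall\varphi$. ${\sf ITL}^{\sf FS}_{\circ\forall}$ is defined likewise but additionally with the axiom (N5) $(\circ\varphi\to\circ\psi)\to\circ(\varphi\to\psi)$. *)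

(* Defs.v *)
Inductive form : Type :=
| Bot : form
| Var : nat -> form
| And : form -> form -> form
| Or : form -> form -> form
| Imp : form -> form -> form
| Next : form -> form
| Univ : form -> form.

Definition Neg (a : form) : form := Imp a Bot.
Definition Iff (a b : form) : form := And (Imp a b) (Imp b a).

Inductive IPC_axiom : form -> Prop :=
| ax_K  a b     : IPC_axiom (Imp a (Imp b a))
| ax_S  a b c   : IPC_axiom (Imp (Imp a (Imp b c)) (Imp (Imp a b) (Imp a c)))
| ax_andE1 a b  : IPC_axiom (Imp (And a b) a)
| ax_andE2 a b  : IPC_axiom (Imp (And a b) b)
| ax_andI a b   : IPC_axiom (Imp a (Imp b (And a b)))
| ax_orI1 a b   : IPC_axiom (Imp a (Or a b))
| ax_orI2 a b   : IPC_axiom (Imp b (Or a b))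
| ax_orE a b c  : IPC_axiom (Imp (Imp a c) (Imp (Imp b c) (Imp (Or a b) c)))
| ax_efq a      : IPC_axiom (Imp Bot a).

Inductive ITL0_axiom : form -> Prop :=
| ax_ipc a : IPC_axiom a -> ITL0_axiom a
| ax_N1 : ITL0_axiom (Neg (Next Bot))
| ax_N2 a b : ITL0_axiom (Imp (And (Next a) (Next b)) (Next (And a b)))
| ax_N3 a b : ITL0_axiom (Imp (Next (Or a b)) (Or (Next a) (Next b)))
| ax_N4 a b : ITL0_axiom (Imp (Next (Imp a b)) (Imp (Next a) (Next b)))
| ax_UA1 a : ITL0_axiom (Or (Univ a) (Neg (Univ a)))
| ax_UA2 a b : ITL0_axiom (Imp (Univ (Imp a b)) (Imp (Univ a) (Univ b)))
| ax_UA3 a b : ITL0_axiom (Imp (Univ (Or a (Univ b))) (Or (Univ a) (Univ b)))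
| ax_UA4 a : ITL0_axiom (Imp (Univ a) a)
| ax_UA5 a : ITL0_axiom (Imp (Univ a) (Univ (Univ a)))
| ax_UA6 a : ITL0_axiom (Iff (Univ a) (Next (Univ a))).

Definition N5_axiom (x : form) : Prop :=
  exists a b, x = Imp (Imp (Next a) (Next b)) (Next (Imp a b)).

Inductive ITL0 : form -> Prop :=
| ITL0_ax a : ITL0_axiom a -> ITL0 a
| ITL0_mp a b : ITL0 (Imp a b) -> ITL0 a -> ITL0 b
| ITL0_nec a : ITL0 a -> ITL0 (Next a)
| ITL0_univ a : ITL0 a -> ITL0 (Univ a).

Inductive ITLFS : form -> Prop :=
| ITLFS_ax a : ITL0_axiom a -> ITLFS a
| ITLFS_N5 a : N5_axiom a -> ITLFS a
| ITLFS_mp a b : ITLFS (Imp a b) -> ITLFS a -> ITLFS b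
| ITLFS_nec a : ITLFS a -> ITLFS (Next a)
| ITLFS_univ a : ITLFS a -> ITLFS (Univ a).

Definition is_partial_order {X : Type} (le : X -> X -> Prop) : Prop :=
  (forall x, le x x) /\
  (forall x y z, le x y -> le y z -> le x z) /\
  (forall x y, le x y -> le y x -> x = y).

(** Open sets of the up-set topology = upward closed sets. *)
Definition upset {X : Type} (le : X -> X -> Prop) (U : X -> Prop) : Prop :=
  forall x y, le x y -> U x -> U y.

Definition up_interior {X : Type} (le : X -> X -> Prop) (S : X -> Prop) : X -> Prop :=
  fun x => forall y, le x y -> S y.

Definition continuous_up {X : Type} (le : X -> X -> Prop) (f : X -> X) : Prop :=
  forall U, upset le U -> upset le (fun x => U (f x)).

Definition open_map_up {X : Type} (le : X -> X -> Prop) (f : X -> X) : Prop :=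
  forall U, upset le U -> upset le (fun y => exists x, U x /\ f x = y).

Definition expanding_poset {X : Type} (le : X -> X -> Prop) (f : X -> X) : Prop :=
  is_partial_order le /\ continuous_up le f.

Definition persistent_poset {X : Type} (le : X -> X -> Prop) (f : X -> X) : Prop :=
  expanding_poset le f /\ open_map_up le f.

Definition valuation {X : Type} (le : X -> X -> Prop) (V : nat -> X -> Prop) : Prop :=
  forall p, upset le (V p).

Fixpoint den {X : Type} (le : X -> X -> Prop) (f : X -> X) (V : nat -> X -> Prop)
  (a : form) : X -> Prop :=
  match a with
  | Bot => fun _ => False
  | Var p => V p
  | And a b => fun x => den le f V a x /\ den le f V b x
  | Or a b => fun x => den le f V a x \/ den le f V b x
  | Imp a b => up_interior le (fun x => ~ den le f V a x \/ den le f V b x)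
  | Next a => fun x => den le f V a (f x)
  | Univ a => fun _ => forall y, den le f V a y
  end.

Definition valid_at {X : Type} (le : X -> X -> Prop) (f : X -> X) (a : form) : Prop :=
  forall V, valuation le V -> forall x, den le f V a x.

Definition valid_expanding (a : form) : Prop :=
  forall (X : Type) (le : X -> X -> Prop) (f : X -> X),
    expanding_poset le f -> valid_at le f a.

Definition valid_persistent (a : form) : Prop :=
  forall (X : Type) (le : X -> X -> Prop) (f : X -> X),
    persistent_poset le f -> valid_at le f a.

(* Main.v *)
Require Import Defs.
From Stdlib Require Import List Arith Lia Classical FunctionalExtensionality PropExtensionality ProofIrrelevance Cantor.
Import ListNotations.

Fixpoint Fl (n : nat) : list form :=
  match n with
  | 0 => [Bot]
  | S m => Bot :: map Var (seq 0 n) ++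
      flat_map (fun a => flat_map (fun b => [And a b; Or a b; Imp a b]) (Fl m)) (Fl m) ++
      flat_map (fun a => [Next a; Univ a]) (Fl m)
  end.

Lemma Fl_complete a : exists N, forall n, N <= n -> In a (Fl n).
Proof.
  induction a.
  - exists 0. intros [|n] _; left; reflexivity.
  - exists (S n). intros [|m] H; [lia|]. cbn [Fl]. right. apply in_or_app. left.
    apply in_map. apply in_seq. lia.
  - destruct IHa1 as [N1 H1], IHa2 as [N2 H2]. exists (S (max N1 N2)).
    intros [|m] H; [lia|]. cbn [Fl]. right. apply in_or_app; right; apply in_or_app; left.
    apply in_flat_map. exists a1. split. apply H1; lia. apply in_flat_map. exists a2.
    split. apply H2; lia. simpl; auto.
  - destruct IHa1 as [N1 H1], IHa2 as [N2 H2]. exists (S (max N1 N2)).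
    intros [|m] H; [lia|]. cbn [Fl]. right. apply in_or_app; right; apply in_or_app; left.
    apply in_flat_map. exists a1. split. apply H1; lia. apply in_flat_map. exists a2.
    split. apply H2; lia. simpl; auto.
  - destruct IHa1 as [N1 H1], IHa2 as [N2 H2]. exists (S (max N1 N2)).
    intros [|m] H; [lia|]. cbn [Fl]. right. apply in_or_app; right; apply in_or_app; left.
    apply in_flat_map. exists a1. split. apply H1; lia. apply in_flat_map. exists a2.
    split. apply H2; lia. simpl; auto.
  - destruct IHa as [N1 H1]. exists (S N1).
    intros [|m] H; [lia|]. cbn [Fl]. right. apply in_or_app; right; apply in_or_app; right.
    apply in_flat_map. exists a. split. apply H1; lia. simpl; auto.
  - destruct IHa as [N1 H1]. exists (S N1).
    intros [|m] H; [lia|]. cbn [Fl]. right. apply in_or_app; right; apply in_or_app; right.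
    apply in_flat_map. exists a. split. apply H1; lia. simpl; auto.
Qed.

Definition enum (k : nat) : form := let (n, i) := of_nat k in nth i (Fl n) Bot.

Lemma enum_surj a : exists k, enum k = a.
Proof.
  destruct (Fl_complete a) as [N HN].
  destruct (In_nth (Fl N) a Bot (HN N (le_n _))) as [i [_ Hi]].
  exists (to_nat (N, i)). unfold enum. rewrite cancel_of_to. exact Hi.
Qed.

Section Canon.
Variable L : form -> Prop.
Hypothesis Lax : forall a, ITL0_axiom a -> L a.
Hypothesis Lmp : forall a b, L (Imp a b) -> L a -> L b.
Hypothesis Lnec : forall a, L a -> L (Next a).
Hypothesis Luniv : forall a, L a -> L (Univ a).

Lemma Lipc a : IPC_axiom a -> L a.
Proof. intro; apply Lax, ax_ipc; auto. Qed.

Lemma L_id a : L (Imp a a).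
Proof.
  apply Lmp with (Imp a (Imp a a)); [|apply Lipc, ax_K].
  apply Lmp with (Imp a (Imp (Imp a a) a)); [apply Lipc, ax_S|apply Lipc, ax_K].
Qed.

Inductive hd (G : list form) : form -> Prop :=
| hd_L a : L a -> hd G a
| hd_hyp a : In a G -> hd G a
| hd_mp a b : hd G (Imp a b) -> hd G a -> hd G b.

Ltac hh := apply hd_hyp; simpl; tauto.

Lemma hd_ded G a b : hd (a :: G) b -> hd G (Imp a b).
Proof.
  induction 1.
  - apply hd_mp with a0. apply hd_L, Lipc, ax_K. apply hd_L; auto.
  - destruct H as [<-|H]. apply hd_L, L_id.
    apply hd_mp with a0; [apply hd_L, Lipc, ax_K| apply hd_hyp; auto].
  - apply hd_mp with (Imp a a0); auto. apply hd_mp with (Imp a (Imp a0 b)); auto.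
    apply hd_L, Lipc, ax_S.
Qed.

Lemma hd_sub G G' p : (forall x, In x G -> hd G' x) -> hd G p -> hd G' p.
Proof. intros H; induction 1; [apply hd_L; auto | auto | eapply hd_mp; eauto]. Qed.

Lemma hd_weak G G' p : incl G G' -> hd G p -> hd G' p.
Proof. intros H; apply hd_sub; intros; apply hd_hyp; auto. Qed.

Lemma hd_nil p : hd [] p -> L p.
Proof. induction 1; auto. destruct H. eapply Lmp; eauto. Qed.

Lemma hd_ax G a : ITL0_axiom a -> hd G a.
Proof. intros; apply hd_L, Lax; auto. Qed.

Lemma hd_ipc G a : IPC_axiom a -> hd G a.
Proof. intros; apply hd_L, Lipc; auto. Qed.

Definition der (T : form -> Prop) a := exists G, (forall x, In x G -> T x) /\ hd G a.

Lemma der_trans T G p : (forall x, In x G -> der T x) -> hd G p -> der T p.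
Proof.
  revert p; induction G as [|x G IH]; intros p HG Hp.
  - exists []. split. intros _ []. exact Hp.
  - destruct (HG x (or_introl eq_refl)) as [Gx [Hx1 Hx2]].
    destruct (IH (Imp x p)) as [H [H1 H2]].
    + intros y Hy; apply HG; right; auto.
    + apply hd_ded; auto.
    + exists (Gx ++ H). split.
      * intros y Hy; apply in_app_or in Hy; destruct Hy; auto.
      * apply hd_mp with x.
        -- apply (hd_weak H); auto. intros y Hy; apply in_or_app; auto.
        -- apply (hd_weak Gx); auto. intros y Hy; apply in_or_app; auto.
Qed.

Lemma der_hyp (T : form -> Prop) a : T a -> der T a.
Proof. intros; exists [a]; split. intros x [<-|[]]; auto. hh. Qed.

Lemma der_L T a : L a -> der T a.
Proof. intros; exists []; split. intros _ []. apply hd_L; auto. Qed.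

Lemma der_mp T a b : der T (Imp a b) -> der T a -> der T b.
Proof.
  intros H1 H2. apply der_trans with [Imp a b; a].
  intros x [<-|[<-|[]]]; auto. apply hd_mp with a; hh.
Qed.

Lemma der_mono (T T' : form -> Prop) a : (forall x, T x -> T' x) -> der T a -> der T' a.
Proof. intros H [G [H1 H2]]; exists G; split; auto. Qed.

Lemma der_ded T a p : der (fun x => T x \/ x = a) p -> der T (Imp a p).
Proof.
  intros [G [HG Hp]]. revert p Hp HG; induction G as [|x G IH]; intros p Hp HG.
  - apply der_L. apply Lmp with p. apply Lipc, ax_K. apply hd_nil; auto.
  - apply hd_ded in Hp. destruct (IH _ Hp) as [G' [H1 H2]].
    { intros y Hy; apply HG; right; auto. }
    destruct (HG x (or_introl eq_refl)) as [Hx | ->].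
    + apply der_trans with [Imp a (Imp x p); x].
      * intros y [<-|[<-|[]]]. exists G'; auto. apply der_hyp; auto.
      * apply hd_ded. apply hd_mp with x; [|hh]. apply hd_mp with a; hh.
    + apply der_trans with [Imp a (Imp a p)].
      * intros y [<-|[]]. exists G'; auto.
      * apply hd_ded. apply hd_mp with a; [|hh]. apply hd_mp with a; hh.
Qed.

Definition prime (T : form -> Prop) :=
  (forall a, der T a -> T a) /\ ~ T Bot /\ (forall a b, T (Or a b) -> T a \/ T b).

Section Lind.
Variables (Sg Pi : form -> Prop).
Hypothesis Pi_or : forall p q, Pi p -> Pi q -> exists r, Pi r /\ L (Imp (Or p q) r).
Hypothesis Pi_ne : exists p, Pi p.
Hypothesis Sg_cons : forall p, Pi p -> ~ der Sg p.

Definition cons (T : form -> Prop) := forall p, Pi p -> ~ der T p.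

Fixpoint Gs (n : nat) : form -> Prop :=
  match n with
  | 0 => Sg
  | S m => fun y => Gs m y \/ (y = enum m /\ cons (fun z => Gs m z \/ z = enum m))
  end.

Definition Dl y := exists n, Gs n y.

Lemma Gs_mono n m : n <= m -> forall y, Gs n y -> Gs m y.
Proof. induction 1; simpl; auto. Qed.

Lemma Gs_cons n : cons (Gs n).
Proof.
  induction n; simpl; auto. intros p Hp Hd.
  destruct (classic (cons (fun z => Gs n z \/ z = enum n))) as [C|C].
  - apply (C p Hp). eapply der_mono; [|exact Hd]. simpl. intros y [H|[H _]]; auto.
  - apply (IHn p Hp). eapply der_mono; [|exact Hd]. intros y [H|[_ H]]; tauto.
Qed.

Lemma Dl_list G : (forall x, In x G -> Dl x) -> exists N, forall x, In x G -> Gs N x.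
Proof.
  induction G as [|a G IH]; intros H.
  - exists 0; intros _ [].
  - destruct IH as [N HN]. intros; apply H; right; auto.
    destruct (H a (or_introl eq_refl)) as [n Hn]. exists (max n N).
    intros x [<-|Hx]. eapply Gs_mono; [|eauto]; lia. eapply Gs_mono; [|eauto]; lia.
Qed.

Lemma Dl_cons : cons Dl.
Proof.
  intros p Hp [G [H1 H2]]. destruct (Dl_list G H1) as [N HN].
  apply (Gs_cons N p Hp). exists G; auto.
Qed.

Lemma Dl_closed a : der Dl a -> Dl a.
Proof.
  intros Ha. destruct (enum_surj a) as [n <-]. exists (S n). right. split; auto.
  intros p Hp Hd. apply (Dl_cons p Hp). destruct Hd as [G [H1 H2]].
  apply der_trans with G; auto. intros x Hx. destruct (H1 x Hx) as [Hy| ->]; auto.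
  apply der_hyp. exists n; auto.
Qed.

Lemma not_cons_der T : ~ cons T -> exists p, Pi p /\ der T p.
Proof.
  intros H. apply NNPP; intro H'. apply H. intros p Hp Hd. apply H'; eauto.
Qed.

Lemma Dl_prime : prime Dl.
Proof.
  split; [apply Dl_closed|split].
  - intro HB. destruct Pi_ne as [p Hp]. apply (Dl_cons p Hp).
    apply der_mp with Bot; [apply der_L, Lipc, ax_efq| apply der_hyp; auto].
  - intros a b Hab. apply NNPP; intro Hn. apply not_or_and in Hn as [Ha Hb].
    destruct (enum_surj a) as [n en], (enum_surj b) as [m em].
    assert (Ca : ~ cons (fun z => Gs n z \/ z = a)).
    { intro C. apply Ha. exists (S n). right. subst a. split; auto. }
    assert (Cb : ~ cons (fun z => Gs m z \/ z = b)).
    { intro C. apply Hb. exists (S m). right. subst b. split; auto. }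
    apply not_cons_der in Ca as [p [Hp Dp]]. apply not_cons_der in Cb as [q [Hq Dq]].
    assert (Ep : der Dl (Imp a p)).
    { apply der_ded. eapply der_mono; [|exact Dp]. intros x [H|H]; [left; exists n|]; auto. }
    assert (Eq : der Dl (Imp b q)).
    { apply der_ded. eapply der_mono; [|exact Dq]. intros x [H|H]; [left; exists m|]; auto. }
    destruct (Pi_or p q Hp Hq) as [r [Hr Lr]].
    apply (Dl_cons r Hr). apply der_trans with [Or a b; Imp a p; Imp b q].
    + intros x [<-|[<-|[<-|[]]]]; auto. apply der_hyp; auto.
    + apply hd_mp with (Or p q). apply hd_L; auto.
      apply hd_mp with (Or a b); [|hh].
      apply hd_mp with (Imp b (Or p q)); [apply hd_mp with (Imp a (Or p q))|].
      * apply hd_ipc, ax_orE.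
      * apply hd_ded. apply hd_mp with p; [apply hd_ipc, ax_orI1|]. apply hd_mp with a; hh.
      * apply hd_ded. apply hd_mp with q; [apply hd_ipc, ax_orI2|]. apply hd_mp with b; hh.
Qed.

Theorem lindenbaum : exists D, prime D /\ (forall x, Sg x -> D x) /\ (forall p, Pi p -> ~ D p).
Proof.
  exists Dl. split; [apply Dl_prime|split].
  - intros x Hx; exists 0; auto.
  - intros p Hp HD. apply (Dl_cons p Hp). apply der_hyp; auto.
Qed.

End Lind.

Section PrimeFacts.
Variable T : form -> Prop.
Hypothesis Tp : prime T.

Lemma pr_der a : der T a -> T a.
Proof. apply Tp. Qed.
Lemma pr_L a : L a -> T a.
Proof. intros; apply pr_der, der_L; auto. Qed.
Lemma pr_mp a b : T (Imp a b) -> T a -> T b.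
Proof. intros; apply pr_der; eapply der_mp; apply der_hyp; eauto. Qed.
Lemma pr_and a b : T (And a b) <-> T a /\ T b.
Proof.
  split.
  - intros H; split; eapply pr_mp; eauto; apply pr_L, Lipc; constructor.
  - intros [H1 H2]. apply pr_mp with b; auto. apply pr_mp with a; auto. apply pr_L, Lipc, ax_andI.
Qed.
Lemma pr_or a b : T (Or a b) <-> T a \/ T b.
Proof.
  split. apply Tp. intros [H|H]; eapply pr_mp; eauto; apply pr_L, Lipc; constructor.
Qed.
Lemma pr_bot : ~ T Bot.
Proof. apply Tp. Qed.
End PrimeFacts.

Lemma hd_next G a : hd G a -> hd (map Next G) (Next a).
Proof.
  induction 1.
  - apply hd_L; auto.
  - apply hd_hyp, in_map; auto.
  - apply hd_mp with (Next a); auto. apply hd_mp with (Next (Imp a b)); auto.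
    apply hd_ax, ax_N4.
Qed.

Lemma hd_univ G a : hd G a -> hd (map Univ G) (Univ a).
Proof.
  induction 1.
  - apply hd_L; auto.
  - apply hd_hyp, in_map; auto.
  - apply hd_mp with (Univ a); auto. apply hd_mp with (Univ (Imp a b)); auto.
    apply hd_ax, ax_UA2.
Qed.

Lemma L_next_mono a b : L (Imp a b) -> L (Imp (Next a) (Next b)).
Proof. intros; eapply Lmp; [apply Lax, ax_N4|]; auto. Qed.

Section Model.
Variable G0 : form -> Prop.
Hypothesis G0p : prime G0.

Definition inW T := prime T /\ forall a, T (Univ a) <-> G0 (Univ a).
Definition W := {T : form -> Prop | inW T}.
Definition leW (x y : W) := forall a, proj1_sig x a -> proj1_sig y a.

Lemma W_eq (x y : W) : (forall a, proj1_sig x a <-> proj1_sig y a) -> x = y.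
Proof.
  destruct x as [T HT], y as [T' HT']; simpl; intros H.
  assert (T = T') by (extensionality a; apply propositional_extensionality; auto).
  subst T'. f_equal; apply proof_irrelevance.
Qed.

Lemma inW_up T T' : inW T -> prime T' -> (forall a, T a -> T' a) -> inW T'.
Proof.
  intros [Tp HT] Tp' Hs. split; auto. intros c; split.
  - intros Hc. apply NNPP; intro Hn. apply (pr_bot T' Tp').
    apply pr_mp with (Univ c); auto. apply Hs.
    destruct (proj1 (pr_or T Tp _ _) (pr_L T Tp _ (Lax _ (ax_UA1 c)))) as [H|H]; auto.
    exfalso; apply Hn, HT; auto.
  - intros; apply Hs, HT; auto.
Qed.

Lemma next_prime T : prime T -> prime (fun a => T (Next a)).
Proof.
  intros Tp. split; [|split].
  - intros a [G [H1 H2]]. apply pr_der; auto. exists (map Next G); split.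
    + intros x Hx; apply in_map_iff in Hx as [y [<- Hy]]; auto.
    + apply hd_next; auto.
  - intros H. apply (pr_bot T Tp). apply pr_mp with (Next Bot); auto.
    apply pr_L; auto. apply Lax, ax_N1.
  - intros a b H. apply (pr_or T Tp). apply pr_mp with (Next (Or a b)); auto.
    apply pr_L; auto. apply Lax, ax_N3.
Qed.

Lemma next_inW T : inW T -> inW (fun a => T (Next a)).
Proof.
  intros [Tp HT]. split. apply next_prime; auto.
  intros a. rewrite <- HT.
  pose proof (pr_L T Tp _ (Lax _ (ax_UA6 a))) as H. unfold Iff in H.
  apply (pr_and T Tp) in H as [H1 H2]. split; intros; eapply pr_mp; eauto.
Qed.

Definition fW (x : W) : W :=
  exist _ (fun a => proj1_sig x (Next a)) (next_inW _ (proj2_sig x)).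
Definition VW (p : nat) (x : W) := proj1_sig x (Var p).

Lemma W_po : is_partial_order leW.
Proof.
  split; [|split].
  - intros x a; auto.
  - intros x y z H1 H2 a Ha; auto.
  - intros x y H1 H2; apply W_eq; split; auto.
Qed.

Lemma W_cont : continuous_up leW fW.
Proof. intros U HU x y Hxy Hx. apply (HU (fW x)); auto. intros a; simpl; apply Hxy. Qed.

Lemma W_val : valuation leW VW.
Proof. intros p x y H; apply H. Qed.

Lemma L_or_idem a : L (Imp (Or a a) a).
Proof. apply Lmp with (Imp a a); [apply Lmp with (Imp a a)|]; try apply L_id. apply Lipc, ax_orE. Qed.

Lemma truth a : forall x, den leW fW VW a x <-> proj1_sig x a.
Proof.
  induction a; intros x; destruct x as [T [Tp HT]]; cbn [den proj1_sig].
  - split; [tauto|]. apply (pr_bot T Tp).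
  - unfold VW; simpl; tauto.
  - rewrite IHa1, IHa2; simpl. symmetry; apply pr_and; auto.
  - rewrite IHa1, IHa2; simpl. symmetry; apply pr_or; auto.
  - unfold up_interior. split.
    + intros H. apply NNPP; intro Hn.
      assert (Hc : ~ der (fun z => T z \/ z = a1) a2).
      { intro Hd. apply Hn. apply pr_der; auto. apply der_ded; auto. }
      destruct (lindenbaum (fun z => T z \/ z = a1) (fun p => p = a2)) as [D [Dp [DS DP]]].
      * intros p q -> ->. exists a2. split; auto. apply L_or_idem.
      * exists a2; auto.
      * intros p ->; auto.
      * pose (y := exist _ D (inW_up T D (conj Tp HT) Dp (fun a H => DS a (or_introl H))) : W).
        destruct (H y) as [H1|H1].
        -- intros a Ha; apply DS; auto.
        -- apply H1. apply IHa1. simpl; apply DS; auto.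
        -- apply IHa2 in H1. simpl in H1. apply (DP a2 eq_refl H1).
    + intros H y Hxy. destruct y as [Y [Yp HY]].
      destruct (classic (Y a1)).
      * right; apply IHa2; simpl. apply pr_mp with a1; auto. apply Hxy; auto.
      * left; intros Hd; apply IHa1 in Hd; auto.
  - rewrite IHa. simpl. tauto.
  - split.
    + intros H. apply NNPP; intro Hn.
      assert (Hn0 : ~ G0 (Univ a)) by (rewrite <- HT; auto).
      destruct (lindenbaum (fun c => G0 (Univ c)) (fun p => p = a)) as [D [Dp [DS DP]]].
      * intros p q -> ->. exists a. split; auto. apply L_or_idem.
      * exists a; auto.
      * intros p -> [G [H1 H2]]. apply Hn0. apply pr_der; auto.
        exists (map Univ G); split.
        -- intros x Hx; apply in_map_iff in Hx as [y [<- Hy]]; auto.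
        -- apply hd_univ; auto.
      * assert (DW : inW D).
        { split; auto. intros c; split.
          - intros Hc. apply NNPP; intro Hc0.
            assert (HO : G0 (Or (Univ (Neg (Univ c))) (Univ c))).
            { apply pr_mp with (Univ (Or (Neg (Univ c)) (Univ c))); auto.
              apply pr_L; auto; apply Lax, ax_UA3. apply pr_L; auto. apply Luniv.
              apply Lmp with (Or (Univ c) (Neg (Univ c))); [|apply Lax, ax_UA1].
              apply Lmp with (Imp (Neg (Univ c)) (Or (Neg (Univ c)) (Univ c)));
                [apply Lmp with (Imp (Univ c) (Or (Neg (Univ c)) (Univ c)))|];
                apply Lipc; constructor. }
            apply (pr_or G0 G0p) in HO as [HO|HO]; [|tauto].
            apply (pr_bot D Dp). apply pr_mp with (Univ c); auto.
          - intros Hc. apply DS. apply pr_mp with (Univ c); auto.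
            apply pr_L; auto; apply Lax, ax_UA5. }
        apply (DP a eq_refl). apply (IHa (exist _ D DW)). apply H.
    + intros H y. apply IHa. destruct y as [Y [Yp HY]]; simpl.
      apply pr_mp with (Univ a); auto. apply pr_L; auto; apply Lax, ax_UA4.
      apply HY, HT; auto.
Qed.

Lemma G0_in : inW G0.
Proof. split; auto; tauto. Qed.

Lemma refute a : ~ G0 a -> ~ valid_at leW fW a.
Proof.
  intros Ha Hv. apply Ha. apply (truth a (exist _ G0 G0_in)). apply Hv. apply W_val.
Qed.

Hypothesis LN5 : forall a, N5_axiom a -> L a.

Lemma W_open : open_map_up leW fW.
Proof.
  intros U HU z z' Hzz' [x [Hx <-]].
  destruct x as [Th [Thp HTh]] eqn:Ex. destruct z' as [D' [D'p HD']] eqn:Ez.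
  unfold leW in Hzz'; simpl in Hzz'.
  destruct (lindenbaum (fun c => Th c \/ exists d, D' d /\ c = Next d)
                       (fun p => exists s, ~ D' s /\ p = Next s)) as [D [Dp [DS DP]]].
  - intros p q [s1 [H1 ->]] [s2 [H2 ->]]. exists (Next (Or s1 s2)). split.
    + exists (Or s1 s2); split; auto. intros Ho; apply (pr_or D' D'p) in Ho; tauto.
    + apply Lmp with (Imp (Next s2) (Next (Or s1 s2)));
        [apply Lmp with (Imp (Next s1) (Next (Or s1 s2)))|];
        [apply Lipc, ax_orE| |]; apply L_next_mono, Lipc; constructor.
  - exists (Next Bot). exists Bot; split; auto. apply (pr_bot D' D'p).
  - intros p [s [Hs ->]] [G [HG Hd]].
    assert (K : forall G p, (forall x, In x G -> Th x \/ exists d, D' d /\ x = Next d) ->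
               hd G p -> exists d, D' d /\ der Th (Imp (Next d) p)).
    { clear HG Hd G Hs s. intros G; induction G as [|w G IH]; intros p HG Hp.
      - exists (Imp Bot Bot). split. apply pr_L; auto; apply L_id.
        apply der_L. apply Lmp with p. apply Lipc, ax_K. apply hd_nil; auto.
      - apply hd_ded in Hp. destruct (IH _ (fun y Hy => HG y (or_intror Hy)) Hp)
          as [d [Hd1 Hd2]].
        destruct (HG w (or_introl eq_refl)) as [Hw | [d' [Hd' ->]]].
        + exists d; split; auto. apply der_trans with [Imp (Next d) (Imp w p); w].
          * intros y [<-|[<-|[]]]; auto. apply der_hyp; auto.
          * apply hd_ded. apply hd_mp with w; [|hh]. apply hd_mp with (Next d); hh.
        + exists (And d d'). split. apply pr_and; auto.
          apply der_trans with [Imp (Next d) (Imp (Next d') p)].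
          * intros y [<-|[]]; auto.
          * apply hd_ded. apply hd_mp with (Next d').
            -- apply hd_mp with (Next d); [hh|]. apply hd_mp with (Next (And d d')); [|hh].
               apply hd_L, L_next_mono, Lipc, ax_andE1.
            -- apply hd_mp with (Next (And d d')); [|hh].
               apply hd_L, L_next_mono, Lipc, ax_andE2. }
    destruct (K G _ HG Hd) as [d [Hd1 Hd2]].
    apply pr_der in Hd2; auto.
    assert (Th (Next (Imp d s))) by (eapply pr_mp; eauto; apply pr_L; auto; apply LN5; eexists; eexists; eauto).
    apply Hs. apply pr_mp with d; auto.
  - pose (y := exist _ D (inW_up Th D (conj Thp HTh) Dp (fun a H => DS a (or_introl H))) : W).
    exists y. split.
    + apply (HU (exist _ Th (conj Thp HTh)) y); auto. intros a Ha; apply DS; auto.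
    + apply W_eq. intros a; simpl. split.
      * intros Ha. apply NNPP; intro Hn. apply (DP (Next a)); eauto.
      * intros Ha. apply DS. right; eauto.
Qed.

End Model.

Lemma L_not_der_empty a : ~ L a -> ~ der (fun _ => False) a.
Proof.
  intros Ha [G [H1 H2]]. apply Ha, hd_nil. apply (hd_sub G); auto.
  intros x Hx; destruct (H1 x Hx).
Qed.

Lemma init_prime a : ~ L a -> exists G0, prime G0 /\ ~ G0 a.
Proof.
  intros Ha. destruct (lindenbaum (fun _ => False) (fun p => p = a)) as [D [Dp [_ DP]]].
  - intros p q -> ->. exists a; split; auto. apply L_or_idem.
  - exists a; auto.
  - intros p ->; apply L_not_der_empty; auto.
  - exists D; split; auto.
Qed.

Lemma complete_exp a : valid_expanding a -> L a.
Proof.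
  intros Hv. apply NNPP; intro Ha. destruct (init_prime a Ha) as [G0 [G0p HG]].
  apply (refute G0 G0p a HG). apply Hv. split; [apply W_po|apply W_cont].
Qed.

Lemma complete_pers : (forall a, N5_axiom a -> L a) -> forall a, valid_persistent a -> L a.
Proof.
  intros LN5 a Hv. apply NNPP; intro Ha. destruct (init_prime a Ha) as [G0 [G0p HG]].
  apply (refute G0 G0p a HG). apply Hv. split; [split; [apply W_po|apply W_cont]|].
  apply W_open; auto.
Qed.

End Canon.

Theorem theorem9p4 :
  (forall a : form, valid_expanding a -> ITL0 a) /\
  (forall a : form, valid_persistent a -> ITLFS a).
Proof.
  split.
  - intros a. apply complete_exp.
    + apply ITL0_ax. + apply ITL0_mp. + apply ITL0_nec. + apply ITL0_univ.
  - intros a. apply complete_pers.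
    + apply ITLFS_ax. + apply ITLFS_mp. + apply ITLFS_nec. + apply ITLFS_univ.
    + apply ITLFS_N5.
Qed.
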